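(* Let $\lambda_1>\lambda_2>\dots>\lambda_n$ be integers (a regular dominant integral weight $\lambda$). An integer point $A$ of the Gelfand–Tsetlin polytope $GT_\lambda$ is a vertex of $GT_\lambda$ if and only if for every $1\le i\le n-1$ and $1\le j\le n-i$ the entry $A_{i,j}$ is equal to at least one of $A_{i-1,j}$ and $A_{i-1,j+1}$.
   Context: $GT_\lambda$ is the polytope in $\mathbb R^{n(n+1)/2}$, with coordinates $A_{i,j}$ for $0\le i\le n-1$, $1\le j\le n-i$, defined by $A_{0,j}=\lambda_j$ for all $j$ and $A_{i,j}\ge A_{i+1,j}\ge A_{i,j+1}$ for all $0\le i\le n-2$, $1\le j\le n-i-1$. *)

(* Defs.v *)
From HB Require Import structures.
From mathcomp Require Import all_boot all_order all_algebra.
From mathcomp Require Import reals.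
Set Implicit Arguments. Unset Strict Implicit. Unset Printing Implicit Defensive.
Import Order.TTheory GRing.Theory Num.Theory.
Local Open Scope ring_scope.

(* A point of R^{n(n+1)/2} is represented by A : nat -> nat -> R; only the
   coordinates A i j with 0 <= i <= n-1, 1 <= j <= n-i are meaningful. *)
Definition GTidx (n i j : nat) : bool := [&& (i < n)%N, (1 <= j)%N & (j <= n - i)%N].

Definition inGT (R : realType) (n : nat) (lam : nat -> R) (A : nat -> nat -> R) : Prop :=
  (forall j, (1 <= j)%N -> (j <= n)%N -> A 0%N j = lam j) /\
  (forall i j, (i.+2 <= n)%N -> (1 <= j)%N -> (j <= n - i - 1)%N ->
     A (i.+1) j <= A i j /\ A i j.+1 <= A (i.+1) j).

Definition isGTVertex (R : realType) (n : nat) (lam : nat -> R) (A : nat -> nat -> R) : Prop :=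
  inGT n lam A /\
  forall (B C : nat -> nat -> R) (t : R),
    inGT n lam B -> inGT n lam C -> 0 < t < 1 ->
    (forall i j, GTidx n i j -> A i j = t * B i j + (1 - t) * C i j) ->
    forall i j, GTidx n i j -> B i j = C i j.

(* Main.v *)
Require Import Defs.
From HB Require Import structures.
From mathcomp Require Import all_boot all_order all_algebra.
From mathcomp Require Import reals.
From mathcomp Require Import zify ring lra.
Import Order.TTheory GRing.Theory Num.Theory.
Local Open Scope ring_scope.

Lemma shift_le (R : realType) (x y : R) (zx zy : int) (s : R) (bp bq : bool) :
  x = zx%:~R -> y = zy%:~R -> x <= y -> -(1/2) <= s <= 1/2 ->
  (bp != bq -> x != y) ->
  (if bp then x + s else x) <= (if bq then y + s else y).
Proof.
move=> -> -> lexy /andP[s1 s2] hne.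
have gap : bp != bq -> (zx%:~R : R) + 1 <= zy%:~R.
  move=> /hne h.
  have lt : (zx%:~R : R) < zy%:~R by rewrite lt_neqAle h lexy.
  have : (zx + 1 <= zy)%R by move: lt; rewrite ltr_int; lia.
  by rewrite -(ler_int R) rmorphD.
clear hne; case: bp gap; case: bq => //= gap; rewrite ?lerD2r //; have := gap isT; lra.
Qed.

Lemma row_mono (R : realType) n (lam : nat -> R) A k l l' :
  inGT n lam A -> (k.+2 <= n)%N -> (1 <= l)%N -> (l <= l')%N -> (l' <= n - k)%N ->
  A k l' <= A k l.
Proof.
move=> [_ H] hk hl; elim: l' => [|l' IH] hll' hl'; first by lia.
case: (ltnP l l'.+1) => h; last by have -> : l = l'.+1 by lia.
have [h1 h2] := H k l' hk (ltac:(lia)) (ltac:(lia)).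
apply: le_trans (IH (ltac:(lia)) (ltac:(lia))).
exact: le_trans h2 h1.
Qed.
Lemma conv_le (R : realType) (a b c t : R) :
  0 < t -> t < 1 -> b <= a -> c <= a -> a = t * b + (1 - t) * c -> b = a /\ c = a.
Proof.
move=> t0 t1 ba ca e.
have h1 : 0 <= t * (a - b) by rewrite mulr_ge0 // ?subr_ge0 // ltW.
have h2 : 0 <= (1 - t) * (a - c) by rewrite mulr_ge0 // ?subr_ge0 // ltW.
have h3 : t * (a - b) + (1 - t) * (a - c) = 0 by rewrite [X in X - b]e [X in X - c]e; ring.
have z1 : t * (a - b) = 0 by apply/le_anti; rewrite h1 andbT -h3 lerDl.
have z2 : (1 - t) * (a - c) = 0 by apply/le_anti; rewrite h2 andbT -h3 lerDr.
move/eqP: z1; rewrite mulf_eq0 gt_eqF //= subr_eq0 => /eqP <-.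
move/eqP: z2; rewrite mulf_eq0 !subr_eq0 (gt_eqF t1) /= => /eqP <-; by split.
Qed.

Lemma conv_ge (R : realType) (a b c t : R) :
  0 < t -> t < 1 -> a <= b -> a <= c -> a = t * b + (1 - t) * c -> b = a /\ c = a.
Proof.
move=> t0 t1 ba ca e.
have [] := @conv_le R (-a) (-b) (-c) t t0 t1; rewrite ?lerN2 //.
  by rewrite e; ring.
by move=> /oppr_inj -> /oppr_inj ->.
Qed.

Theorem mainTheorem3 (R : realType) (n : nat) (lam : nat -> int)
  (Hlam : forall j, (1 <= j)%N -> (j < n)%N -> lam j.+1 < lam j)
  (A : nat -> nat -> R)
  (Hint : forall i j, GTidx n i j -> exists z : int, A i j = z%:~R)
  (HA : inGT n (fun j => (lam j)%:~R) A) :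
  isGTVertex n (fun j => (lam j)%:~R) A <->
  (forall i j, (1 <= i)%N -> (i <= n - 1)%N -> (1 <= j)%N -> (j <= n - i)%N ->
     A i j = A i.-1 j \/ A i j = A i.-1 j.+1).
Proof.
split.
- move=> [_ HV] [|k] j hi1 hin hj1 hjn //=.
  have hkn : (k.+2 <= n)%N by lia.
  case: (eqVneq (A k.+1 j) (A k j)) => [->|h1]; first by left.
  case: (eqVneq (A k.+1 j) (A k j.+1)) => [->|h2]; first by right.
  exfalso.
  set v := A k.+1 j.
  have [e1 e2] := HA.2 k j hkn hj1 (ltac:(lia)).
  have Hno : forall m, (1 <= m)%N -> (m <= n - k)%N -> A k m != v.
    move=> m hm1 hm2; apply/eqP=> e.
    case: (leqP m j) => hmj.
    + have r := @row_mono _ _ _ _ k m j HA hkn hm1 hmj (ltac:(lia)).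
      move: h1; rewrite -/v eq_le e1 /= -e r //.
    + have r := @row_mono _ _ _ _ k j.+1 m HA hkn (ltac:(lia) : (1 <= j.+1)%N) hmj hm2.
      move: h2; rewrite -/v eq_le e2 andbT -e r //.
  pose P a b := ((k.+1 <= a)%N && (A a b == v)).
  pose B (s : R) a b := if P a b then A a b + s else A a b.
  have Hadj : forall a b b', (a.+2 <= n)%N -> (1 <= b)%N -> (b <= n - a)%N ->
      P a b != P a.+1 b' -> A a b != A a.+1 b'.
    move=> a b b' ha hb1 hb2; rewrite /P.
    case: (leqP k.+1 a) => ha'.
      have -> : (k.+1 <= a.+1)%N by lia.
      rewrite /= => hne; apply/eqP=> e; move: hne; by rewrite e eqxx.
    case: (leqP k.+1 a.+1) => ha2 /=; last by [].
    have eak : a = k by lia.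
    move: hb1 hb2; rewrite eak => hb1 hb2.
    case: (A k.+1 b' =P v) => [->|] //= _; exact: Hno.
  have HB : forall s : R, -(1/2) <= s <= 1/2 -> inGT n (fun j => (lam j)%:~R) (B s).
    move=> s hs; split.
      by move=> j' h1' h2'; rewrite /B /P /= HA.1.
    move=> a b ha hb1 hb2.
    have [f1 f2] := HA.2 a b ha hb1 hb2.
    have [z1 ez1] := Hint a b (ltac:(rewrite /GTidx; apply/and3P; split; lia)).
    have [z2 ez2] := Hint a.+1 b (ltac:(rewrite /GTidx; apply/and3P; split; lia)).
    have [z3 ez3] := Hint a b.+1 (ltac:(rewrite /GTidx; apply/and3P; split; lia)).
    split; rewrite /B.
    + apply: (@shift_le _ _ _ _ _ _ _ _ ez2 ez1 f1 hs) => hne.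
      rewrite eq_sym; apply: Hadj => //; first by lia.
      by rewrite eq_sym.
    + apply: (@shift_le _ _ _ _ _ _ _ _ ez3 ez2 f2 hs) => hne.
      apply: Hadj => //; lia.
  have t01 : 0 < (1/2 : R) < 1 by apply/andP; split; lra.
  have s1 : -(1/2) <= (1/2 : R) <= 1/2 by apply/andP; split; lra.
  have s2 : -(1/2) <= (-(1/2) : R) <= 1/2 by apply/andP; split; lra.
  have Hcv : forall a b, GTidx n a b ->
      A a b = 1/2 * B (1/2) a b + (1 - 1/2) * B (-(1/2)) a b.
    move=> a b _; rewrite /B; case: (P a b); move: (A a b) => x; lra.
  have := HV _ _ _ (HB _ s1) (HB _ s2) t01 Hcv k.+1 j.
  have hg : GTidx n k.+1 j by rewrite /GTidx; apply/and3P; split; lia.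
  move=> /(_ hg); rewrite /B.
  have -> : P k.+1 j = true by rewrite /P leqnn eqxx.
  move: (A k.+1 j) => x; lra.
- move=> Hc; split => // B C t HB HC /andP[t0 t1] Hcomb.
  have key : forall i j, GTidx n i j -> B i j = A i j /\ C i j = A i j.
    elim=> [|k IH] j; rewrite /GTidx => /and3P[hi hj1 hj2].
      by rewrite HB.1 ?HC.1 ?HA.1 //; lia.
    have [b1 b2] := HB.2 k j (ltac:(lia)) hj1 (ltac:(lia)).
    have [c1 c2] := HC.2 k j (ltac:(lia)) hj1 (ltac:(lia)).
    have hcomb := Hcomb k.+1 j (ltac:(rewrite /GTidx; apply/and3P; split; lia)).
    case: (Hc k.+1 j (ltac:(lia)) (ltac:(lia)) hj1 hj2) => /= e.
    + have [IB IC] := IH j (ltac:(apply/and3P; split; lia)).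
      rewrite e; apply: (@conv_le _ _ _ _ _ t0 t1).
      * by rewrite -IB.
      * by rewrite -IC.
      * by rewrite -e.
    + have [IB IC] := IH j.+1 (ltac:(apply/and3P; split; lia)).
      rewrite e; apply: (@conv_ge _ _ _ _ _ t0 t1).
      * by rewrite -IB.
      * by rewrite -IC.
      * by rewrite -e.
  by move=> i j h; have [-> ->] := key i j h.
Qed.
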